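(* Under assumptions (i) and (ii) below, $\mathcal T\subset\mathcal L(H_1,H_2)$, where $\mathcal T=\{H\in\mathcal O:(H\psi_k,\psi_k)=0\text{ for all }k=1,\dots,N\}$ (a real space of dimension $N(N-1)$). (i) $(H_1\psi_k,\psi_j)\ne0$ for all $k\ne j$; (ii) $\lambda_k-\lambda_l\ne\lambda_{k'}-\lambda_{l'}$ for all ordered pairs $(k,l)\ne(k',l')$, where $\lambda_k$ are the eigenvalues of $H_2$ and $\psi_k$ corresponding orthonormal eigenvectors.
   Context: $\mathcal H=\mathbb C^N$, $N>1$. $\mathcal O$ is the real vector space of Hermitian operators on $\mathcal H$, with bracket $\{A,B\}=i(AB-BA)$. For $H_1,H_2\in\mathcal O$, $\mathcal L(H_1,H_2)$ is the real linear span of $H_1,H_2$ and all iterated brackets $\{H_1,H_2\},\{H_1,\{H_1,H_2\}\},\{H_2,\{H_1,H_2\}\},\dots$. *)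

(* Defs.v *)
(* The complex numbers C are modelled by an arbitrary
   numClosedFieldType (algebraically closed field with conjugation and
   ordered real part), e.g. algC. *)
From HB Require Import structures.
From mathcomp Require Import all_boot all_order all_algebra.
Set Implicit Arguments. Unset Strict Implicit. Unset Printing Implicit Defensive.
Import Order.TTheory GRing.Theory Num.Theory.
Local Open Scope ring_scope.

Definition inner (C : numClosedFieldType) (N : nat) (x y : 'cV[C]_N) : C :=
  \sum_(i < N) x i ord0 * (y i ord0)^*.

Definition herm_op (C : numClosedFieldType) (N : nat) (A : 'M[C]_N) : Prop :=
  map_mx Num.conj (A^T) = A.

Definition bracket (C : numClosedFieldType) (N : nat) (A B : 'M[C]_N) : 'M[C]_N :=
  'i *: (A *m B - B *m A).

Inductive brterm : Type :=
  | BLeaf1 : brterm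
  | BLeaf2 : brterm
  | BNode : brterm -> brterm -> brterm.

Fixpoint br_eval (C : numClosedFieldType) (N : nat) (H1 H2 : 'M[C]_N)
    (t : brterm) : 'M[C]_N :=
  match t with
  | BLeaf1 => H1
  | BLeaf2 => H2
  | BNode t1 t2 => bracket (br_eval H1 H2 t1) (br_eval H1 H2 t2)
  end.

(* H belongs to L(H1,H2): the real linear span of H1, H2 and all iterated
   brackets, i.e. a finite real linear combination of evaluated terms. *)
Definition in_L (C : numClosedFieldType) (N : nat) (H1 H2 H : 'M[C]_N) : Prop :=
  exists s : seq (C * brterm),
    all (fun p => p.1 \is Num.real) s /\
    H = \sum_(p <- s) p.1 *: br_eval H1 H2 p.2.

(* Main.v *)
Require Import Defs.
From HB Require Import structures.
From mathcomp Require Import all_boot all_order all_algebra.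
Set Implicit Arguments. Unset Strict Implicit. Unset Printing Implicit Defensive.
Import Order.TTheory GRing.Theory Num.Theory.
Local Open Scope ring_scope.
From mathcomp Require Import ring.

Lemma interp (C : fieldType) (I : finType) (P : pred I) (x y : I -> C) :
  (forall p, P p -> x p != 0) ->
  (forall p q, P p -> P q -> p != q -> x p != x q) ->
  exists Q : {poly C}, Q.[0] = 0 /\ forall p, P p -> Q.[x p] = y p.
Proof.
move=> nz dif.
pose L p := 'X * ((x p)^-1)%:P * \prod_(q | P q && (q != p)) (('X - (x q)%:P) * ((x p - x q)^-1)%:P).
have EL : forall p z, (L p).[z] = z * (x p)^-1 * \prod_(q | P q && (q != p)) ((z - x q) * (x p - x q)^-1).
  move=> p z; rewrite /L hornerM hornerM hornerX hornerC horner_prod.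
  by congr (_ * _); apply: eq_bigr => q _; rewrite hornerM hornerXsubC hornerC.
exists (\sum_(p | P p) y p *: L p); split.
  rewrite horner_sum big1 // => p _; by rewrite hornerZ EL !mul0r mulr0.
move=> p Pp; rewrite horner_sum (bigD1 p) //= big1 ?addr0.
  rewrite hornerZ EL mulfV ?nz // mul1r big1 ?mulr1 // => q /andP[Pq qp].
  by rewrite mulfV // subr_eq0 dif // eq_sym.
move=> r /andP[Pr rp]; rewrite hornerZ EL (bigD1 p) /=; last by rewrite Pp eq_sym.
by rewrite subrr !mul0r !mulr0.
Qed.

Theorem mainTheorem7 (C : numClosedFieldType) (N : nat) (hN : (1 < N)%N)
  (H1 H2 : 'M[C]_N) (hH1 : herm_op H1) (hH2 : herm_op H2)
  (lambda : 'I_N -> C) (psi : 'I_N -> 'cV[C]_N)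
  (hortho : forall k j : 'I_N, inner (psi k) (psi j) = (k == j)%:R)
  (heig : forall k : 'I_N, H2 *m psi k = lambda k *: psi k)
  (hi : forall k j : 'I_N, k != j -> inner (H1 *m psi k) (psi j) != 0)
  (hii : forall k l k' l' : 'I_N, k != l -> k' != l' -> (k, l) != (k', l') ->
           lambda k - lambda l != lambda k' - lambda l') :
  forall H : 'M[C]_N, herm_op H ->
    (forall k : 'I_N, inner (H *m psi k) (psi k) = 0) ->
    in_L H1 H2 H.
Proof.
move=> H hH hdiag.
pose U : 'M[C]_N := \matrix_(i, k) psi k i ord0.
pose V : 'M[C]_N := (map_mx Num.conj U)^T.
pose M (A : 'M[C]_N) := V *m A *m U.
have ME : forall A k j, M A k j = inner (A *m psi j) (psi k).
  move=> A k j; rewrite /M -mulmxA mxE /inner.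
  apply: eq_bigr => i _; rewrite mulrC !mxE; congr (_ * _).
  by apply: eq_bigr => l _; rewrite !mxE.
have VU : V *m U = 1%:M.
  apply/matrixP => k j; have := ME 1%:M k j; rewrite /M mulmx1 => ->.
  by rewrite mul1mx hortho mxE eq_sym.
have UV : U *m V = 1%:M by apply: mulmx1C.
have Minj : forall A B, M A = M B -> A = B.
  move=> A B E; have := congr1 (fun X => U *m X *m V) E; rewrite /M /=.
  by rewrite !mulmxA UV !mul1mx -!mulmxA UV !mulmx1.
have MM : forall A B, M (A *m B) = M A *m M B.
  by move=> A B; rewrite /M !mulmxA -[V *m A *m U *m V]mulmxA UV mulmx1.
have Mherm : forall A, herm_op A -> forall k j, M A j k = (M A k j)^*.
  move=> A hA k j.
  have -> : (M A k j)^* = (map_mx Num.conj (M A)^T) j k by rewrite !mxE.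
  have e1 : map_mx Num.conj U^T = V by rewrite /V map_trmx.
  have e2 : map_mx Num.conj V^T = U by apply/matrixP => a b; rewrite !mxE conjCK.
  congr (_ j k); rewrite /M !trmx_mul !map_mxM e1 e2 hA.
  by rewrite mulmxA.
have MH2 : forall k j, M H2 k j = lambda j * (j == k)%:R.
  move=> k j; rewrite ME heig -hortho /inner mulr_sumr.
  by apply: eq_bigr => i _; rewrite mxE mulrA.
have lreal : forall k, (lambda k)^* = lambda k.
  move=> k; have := Mherm _ hH2 k k; rewrite MH2 eqxx mulr1 => <-.
  done.
pose t m := iter m (BNode BLeaf2) BLeaf1.
pose X m := br_eval H1 H2 (t m).
have MH2d : M H2 = diag_mx (\row_k lambda k).
  apply/matrixP => k j; rewrite MH2 !mxE.
  have [->|kj] := eqVneq k j; first by rewrite mulr1 mulr1n.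
  by rewrite mulr0 mulr0n.
have MX : forall m k j, M (X m) k j = ('i * (lambda k - lambda j)) ^+ m * M H1 k j.
  elim=> [|m IH] k j; first by rewrite expr0 mul1r.
  have -> : X m.+1 = bracket H2 (X m) by [].
  have -> : M (bracket H2 (X m)) = 'i *: (M H2 *m M (X m) - M (X m) *m M H2).
    by rewrite -!MM /M /bracket -scalemxAr -scalemxAl mulmxBr mulmxBl.
  move: (IH k j); rewrite MH2d.
  move: (M (X m)) (M H1) => AX A1 IHkj.
  rewrite mul_diag_mx mul_mx_diag !mxE IHkj exprS; ring.
have Msum : forall (r : seq nat) (c : nat -> C) (A : nat -> 'M[C]_N),
    M (\sum_(m <- r) c m *: A m) = \sum_(m <- r) c m *: M (A m).
  move=> r c A; rewrite /M mulmx_sumr mulmx_suml; apply: eq_bigr => m _.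
  by rewrite -scalemxAr -scalemxAl.
have lneq : forall k j : 'I_N, k != j -> lambda k != lambda j.
  move=> k j kj; apply/eqP => e; have := hii k j j k kj.
  rewrite eq_sym kj => /(_ isT); rewrite xpair_eqE (negbTE kj) /= => /(_ isT).
  by rewrite e subrr eqxx.
pose x (p : 'I_N * 'I_N) := 'i * (lambda p.1 - lambda p.2).
pose y (p : 'I_N * 'I_N) := M H p.1 p.2 / M H1 p.1 p.2.
have [Q [Q0 Qx]] : exists Q : {poly C}, Q.[0] = 0 /\ forall p : 'I_N * 'I_N, p.1 != p.2 -> Q.[x p] = y p.
  apply: interp.
  move=> [k j] /= kj; rewrite /x mulf_neq0 ?neq0Ci // subr_eq0 /=; exact: lneq.
  move=> [k j] [k' j'] /= kj kj' pq; rewrite /x /= (inj_eq (mulfI (neq0Ci C))).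
  exact: hii.
have Qre : forall z, \sum_(i < size Q) 'Re Q`_i * z ^+ i = (Q.[z] + (Q.[z^*])^*) / 2.
  move=> z; rewrite !horner_coef rmorph_sum -big_split mulr_suml /=.
  apply: eq_bigr => i _; rewrite ReE rmorphM rmorphXn /= conjCK; ring.
exists [seq ('Re Q`_m, t m) | m <- index_iota 0 (size Q)]; split.
  by rewrite all_map; apply/allP => m _; exact: Creal_Re.
apply: Minj; rewrite big_map Msum; apply/matrixP => k j.
rewrite summxE.
under eq_bigr => m _ do rewrite mxE MX /= mulrA.
rewrite -mulr_suml big_mkord Qre.
have [<-|kj] := eqVneq k j.
  rewrite subrr mulr0 rmorph0 Q0 rmorph0 addr0 mul0r mul0r ME hdiag //.
have -> : ('i * (lambda k - lambda j))^* = x (j, k).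
  rewrite rmorphM rmorphB /= conjCi !lreal /x /=; ring.
rewrite (Qx (k, j)) // (Qx (j, k)) 1?eq_sym // /y /= fmorph_div /= -(Mherm H hH j k) -(Mherm H1 hH1 j k).
have a0 : M H1 k j != 0 by rewrite ME; apply: hi; rewrite eq_sym.
field.
by [].
Qed.
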